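(* Let $\mathcal{P}=\bigcap_{g\in S}D_g(J)$, where $S=\{u_k,u_k^{-1}:k=1,\dots,8\}$ and $D_g(J)=\{P\in\mathbb{H}^3:\rho(J,P)\le\rho(g(J),P)\}$. Then the hyperbolic volume of $\mathcal{P}$, computed with the volume form $\frac{dx\,dy\,dr}{r^3}$, satisfies $\mathrm{Vol}(\mathcal{P})<9.77029$. Note that $9.77029\ldots=2\cdot\frac{32\,\zeta_{\mathbb{Q}(i)}(2)}{\pi^2}$, where $\zeta_{\mathbb{Q}(i)}$ is the Dedekind zeta function of $\mathbb{Q}(i)$.
   Context: Hyperbolic space. $\mathbb{H}^3=\{(z,r):z=x+iy\in\mathbb{C},\ r>0\}$ is the upper half-space model. Its hyperbolic distance $\rho$ is given by $$\cosh\rho((z,r),(z',r'))=1+\frac{|z-z'|^2+(r-r')^2}{2rr'}.$$ Let $g=\begin{pmatrix}a&b\\ c&d\end{pmatrix}\in SL_2(\mathbb{C})$. It acts on $\mathbb{H}^3$ by $g(z,r)=(z^*,r^* )$, where $$z^*=\frac{(az+b)(\bar c\bar z+\bar d)+a\bar c r^2}{|cz+d|^2+|c|^2r^2},\qquad r^*=\frac{r}{|cz+d|^2+|c|^2r^2}.$$ Let $J=(0,1)$. Number field. Let $\theta=\frac{1+\sqrt5}{2}$ and $\bar\theta=1-\theta$. The units $u_1,\dots,u_8$ are: - $u_1=\begin{pmatrix}i\theta&0\\0&i\bar\theta\end{pmatrix}$, - $u_2=\begin{pmatrix}i&1+i\\ i-1&i\end{pmatrix}$, - $u_3=\begin{pmatrix}\theta&1+i\\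 i-1&\bar\theta\end{pmatrix}$, - $u_4=\begin{pmatrix}\theta&-1-i\\ 1-i&\bar\theta\end{pmatrix}$, - $u_5=\begin{pmatrix}1+i&1+i\bar\theta\\ i(1+i\theta)&1+i\end{pmatrix}$, - $u_6=\begin{pmatrix}1+i&1+i\theta\\ i(1+i\bar\theta)&1+i\end{pmatrix}$, - $u_7=\begin{pmatrix}1-i&\bar\theta+i\\ i(\theta+i)&1-i\end{pmatrix}$, - $u_8=\begin{pmatrix}1-i&\theta+i\\ i(\bar\theta+i)&1-i\end{pmatrix}$. *)

(* Defs.v *)
From Stdlib Require Import Reals List.
Import ListNotations.
Open Scope R_scope.

Record C := mkC { re : R ; im : R }.
Definition C0 : C := mkC 0 0.
Definition Ci : C := mkC 0 1.
Definition CR (x : R) : C := mkC x 0.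
Definition Cadd (z w : C) : C := mkC (re z + re w) (im z + im w).
Definition Copp (z : C) : C := mkC (- re z) (- im z).
Definition Cmul (z w : C) : C :=
  mkC (re z * re w - im z * im w) (re z * im w + im z * re w).
Definition Cconj (z : C) : C := mkC (re z) (- im z).
Definition Cnorm2 (z : C) : R := re z * re z + im z * im z.
Definition Cscal (t : R) (z : C) : C := mkC (t * re z) (t * im z).

Record pt := mkPt { pz : C ; pr : R }.
Definition inH3 (p : pt) : Prop := 0 < pr p.
Definition J : pt := mkPt C0 1.

Definition cosh_rho (p q : pt) : R :=
  1 + (Cnorm2 (Cadd (pz p) (Copp (pz q))) + (pr p - pr q) ^ 2)
      / (2 * pr p * pr q).
Definition arcosh (t : R) : R := ln (t + sqrt (t * t - 1)).
Definition rho (p q : pt) : R := arcosh (cosh_rho p q).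

Record M2 := mkM2 { ma : C ; mb : C ; mc : C ; md : C }.

(* inverse of an element of SL_2(C) (det = 1): [[d,-b],[-c,a]] *)
Definition M2inv (g : M2) : M2 :=
  mkM2 (md g) (Copp (mb g)) (Copp (mc g)) (ma g).

Definition act (g : M2) (p : pt) : pt :=
  let a := ma g in let b := mb g in let c := mc g in let d := md g in
  let z := pz p in let r := pr p in
  let den := Cnorm2 (Cadd (Cmul c z) d) + Cnorm2 c * r ^ 2 in
  mkPt
    (Cscal (/ den)
       (Cadd (Cmul (Cadd (Cmul a z) b)
                   (Cadd (Cmul (Cconj c) (Cconj z)) (Cconj d)))
             (Cscal (r ^ 2) (Cmul a (Cconj c)))))
    (r / den).

Definition theta : R := (1 + sqrt 5) / 2.
Definition thetab : R := 1 - theta.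
Definition Cth : C := CR theta.
Definition Cthb : C := CR thetab.
Definition C1 : C := CR 1.
Definition onei : C := Cadd C1 Ci.
Definition onemi : C := Cadd C1 (Copp Ci).
Definition im1 : C := Cadd Ci (Copp C1).

Definition u1 : M2 := mkM2 (Cmul Ci Cth) C0 C0 (Cmul Ci Cthb).
Definition u2 : M2 := mkM2 Ci onei im1 Ci.
Definition u3 : M2 := mkM2 Cth onei im1 Cthb.
Definition u4 : M2 := mkM2 Cth (Copp onei) onemi Cthb.
Definition u5 : M2 := mkM2 onei (Cadd C1 (Cmul Ci Cthb))
                           (Cmul Ci (Cadd C1 (Cmul Ci Cth))) onei.
Definition u6 : M2 := mkM2 onei (Cadd C1 (Cmul Ci Cth))
                           (Cmul Ci (Cadd C1 (Cmul Ci Cthb))) onei.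
Definition u7 : M2 := mkM2 onemi (Cadd Cthb Ci)
                           (Cmul Ci (Cadd Cth Ci)) onemi.
Definition u8 : M2 := mkM2 onemi (Cadd Cth Ci)
                           (Cmul Ci (Cadd Cthb Ci)) onemi.

Definition units : list M2 := [u1; u2; u3; u4; u5; u6; u7; u8].

Definition S : list M2 := units ++ map M2inv units.

Definition Dg (g : M2) (P : pt) : Prop :=
  inH3 P /\ rho J P <= rho (act g J) P.

Definition Poly (P : pt) : Prop := inH3 P /\ forall g, In g S -> Dg g P.

Record box := mkBox { bx1 : R ; bx2 : R ; by1 : R ; by2 : R ; br1 : R ; br2 : R }.
Definition box_valid (b : box) : Prop :=
  bx1 b <= bx2 b /\ by1 b <= by2 b /\ 0 < br1 b /\ br1 b <= br2 b.
Definition in_box (b : box) (p : pt) : Prop :=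
  bx1 b <= re (pz p) <= bx2 b /\ by1 b <= im (pz p) <= by2 b /\
  br1 b <= pr p <= br2 b.
(* exact value of  \int_box dx dy dr / r^3 *)
Definition box_hvol (b : box) : R :=
  (bx2 b - bx1 b) * (by2 b - by1 b) * (/ (2 * br1 b ^ 2) - / (2 * br2 b ^ 2)).

(* Hyperbolic volume as the (Lebesgue) outer measure w.r.t. dx dy dr / r^3,
   i.e. inf over countable box covers of the sum of box volumes.
   "Vol(A) < c" holds iff some countable box cover has total volume < c. *)
Definition hvol_lt (A : pt -> Prop) (c : R) : Prop :=
  exists b : nat -> box,
    (forall n, box_valid (b n)) /\
    (forall p, A p -> exists n, in_box (b n) p) /\
    exists M, M < c /\ forall n, sum_f_R0 (fun k => box_hvol (b k)) n <= M.

(* Main.v *)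
Require Import Defs.
From Stdlib Require Import Reals Lra Psatz List.
Import ListNotations.
Open Scope R_scope.
Definition den (g : M2) : R := Cnorm2 (md g) + Cnorm2 (mc g).
Definition Qc (g : M2) : Defs.C := Cadd (Cmul (mb g) (Cconj (md g))) (Cmul (ma g) (Cconj (mc g))).
Definition Qx g := re (Qc g).
Definition Qy g := im (Qc g).

Lemma arcosh_mono_inv a b : 1 <= a -> 1 <= b -> arcosh a <= arcosh b -> a <= b.
Proof.
  intros Ha Hb H. destruct (Rle_lt_dec a b) as [|Hlt]; [assumption|].
  exfalso. unfold arcosh in H.
  assert (sqrt (b*b-1) <= sqrt (a*a-1)) by (apply sqrt_le_1_alt; nra).
  assert (0 <= sqrt (b*b-1)) by apply sqrt_pos.
  assert (ln (b + sqrt (b*b-1)) < ln (a + sqrt (a*a-1))) by (apply ln_increasing; lra).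
  lra.
Qed.

Lemma cosh_ge1 p q : 0 < pr p -> 0 < pr q -> 1 <= cosh_rho p q.
Proof.
  intros. unfold cosh_rho, Cnorm2.
  set (u := re (Cadd (pz p) (Copp (pz q)))). set (v := im (Cadd (pz p) (Copp (pz q)))).
  assert (0 <= u*u + v*v + (pr p - pr q) ^ 2) by (pose proof (Rle_0_sqr u); pose proof (Rle_0_sqr v); pose proof (pow2_ge_0 (pr p - pr q)); unfold Rsqr in *; lra).
  assert (0 <= (u*u + v*v + (pr p - pr q) ^ 2) / (2 * pr p * pr q)).
  { unfold Rdiv; apply Rmult_le_pos; [assumption|]. apply Rlt_le, Rinv_0_lt_compat. nra. }
  lra.
Qed.

Lemma actJ g : 0 < den g ->
  act g J = mkPt (mkC (Qx g / den g) (Qy g / den g)) (/ den g).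
Proof.
  intros Hd. destruct g as [[ar ai] [br bi] [cr ci] [dr di]].
  unfold den, Qx, Qy, Qc, act, J, C0 in *; simpl in *.
  unfold Cnorm2 in *; simpl in *.
  f_equal; [unfold Cscal, Cadd, Cmul, Cconj; simpl; f_equal|]; field; lra.
Qed.

Lemma gen g P : 0 < den g -> Dg g P ->
  let x := re (pz P) in let y := im (pz P) in let r := pr P in
  (den g - den g * den g) * (x*x + y*y + r*r) + 2 * den g * (Qx g * x + Qy g * y)
   <= Qx g * Qx g + Qy g * Qy g + 1 - den g.
Proof.
  intros Hd [Hr H]. unfold inH3 in Hr.
  apply arcosh_mono_inv in H; [| apply cosh_ge1; simpl; lra | ].
  2:{ apply cosh_ge1; [rewrite actJ by lra; simpl; apply Rinv_0_lt_compat; lra | lra]. }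
  rewrite actJ in H by lra.
  destruct P as [[x y] r]. simpl in *.
  set (D := den g) in *. set (a := Qx g) in *. set (b := Qy g) in *.
  unfold cosh_rho, Cnorm2, J, C0 in H; simpl in H.
  set (A := ((0 + - x) * (0 + - x) + (0 + - y) * (0 + - y) + (1 - r) * ((1 - r) * 1))) in H.
  set (B := ((a / D + - x) * (a / D + - x) + (b / D + - y) * (b / D + - y) + (/ D - r) * ((/ D - r) * 1))) in H.
  assert (E: B / (2 * / D * r) = (B * D) / (2 * 1 * r)) by (field; lra).
  rewrite E in H.
  assert (H2: A <= B * D).
  { apply (Rmult_le_reg_r (/ (2 * 1 * r))). apply Rinv_0_lt_compat; lra.
    unfold Rdiv in H. lra. }
  assert (H3: A * D <= B * D * D) by (apply Rmult_le_compat_r; lra).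
  assert (E2: B * D * D = (a - x*D)*(a - x*D) + (b - y*D)*(b-y*D) + (1 - r*D)^2).
  { unfold B. field. lra. }
  unfold A in H3. rewrite E2 in H3. nra.
Qed.

Lemma s5sq : sqrt 5 * sqrt 5 = 5.
Proof. apply sqrt_sqrt; lra. Qed.
Lemma s5lo : 2236067/1000000 < sqrt 5.
Proof. pose proof s5sq. pose proof (sqrt_pos 5). nra. Qed.
Lemma s5hi : sqrt 5 < 2236068/1000000.
Proof. pose proof s5sq. pose proof (sqrt_pos 5). nra. Qed.

Lemma bsq a : a*a <= 26181/10000 -> -162/100 <= a <= 162/100.
Proof. intros. nra. Qed.

Ltac tfacts :=
  pose proof s5sq as T2; pose proof s5lo as Tlo; pose proof s5hi as Thi;
  set (t := sqrt 5) in *.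

Ltac powf v :=
  let t := constr:(sqrt 5) in
  assert (sqrt 5 * sqrt 5 * v = 5 * v) by (rewrite s5sq; ring);
  assert (sqrt 5 * sqrt 5 * sqrt 5 * v = 5 * (sqrt 5 * v)) by
     (replace (sqrt 5 * sqrt 5 * sqrt 5 * v) with (sqrt 5 * sqrt 5 * (sqrt 5 * v)) by ring; rewrite s5sq; ring);
  assert (sqrt 5 * sqrt 5 * sqrt 5 * sqrt 5 * v = 25 * v) by
     (replace (sqrt 5 * sqrt 5 * sqrt 5 * sqrt 5 * v) with (sqrt 5 * sqrt 5 * (sqrt 5 * sqrt 5) * v) by ring; rewrite s5sq; ring).

Ltac mcc v :=
  assert (0 <= (sqrt 5 - 2236067/1000000) * v) by (apply Rmult_le_pos; [pose proof s5lo; lra| lra]);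
  assert (0 <= (2236068/1000000 - sqrt 5) * v) by (apply Rmult_le_pos; [pose proof s5hi; lra| lra]).

Ltac consts :=
  pose proof s5lo; pose proof s5hi;
  assert (sqrt 5 * sqrt 5 = 5) by apply s5sq;
  assert (sqrt 5 * sqrt 5 * sqrt 5 = 5 * sqrt 5) by (rewrite s5sq; ring);
  assert (sqrt 5 * sqrt 5 * sqrt 5 * sqrt 5 = 25) by
     (replace (sqrt 5 * sqrt 5 * sqrt 5 * sqrt 5) with (sqrt 5 * sqrt 5 * (sqrt 5 * sqrt 5)) by ring; rewrite s5sq; ring).

Ltac dpos := consts; lra.

Ltac relax0 x y r :=
  assert (0 <= x*x+y*y+r*r) by nra;
  set (w := x*x+y*y+r*r) in *;
  consts; powf w; mcc w; lra.

Ltac relax x y r :=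
  assert (0 <= x*x+y*y+r*r) by nra;
  assert (Hx : -162/100 <= x <= 162/100) by (apply bsq; nra);
  assert (Hy : -162/100 <= y <= 162/100) by (apply bsq; nra);
  set (w := x*x+y*y+r*r) in *;
  consts; powf w; powf x; powf y; mcc w;
  mcc (x + 162/100); mcc (162/100 - x); mcc (y + 162/100); mcc (162/100 - y);
  lra.
Lemma den0 : 0 < den u1.
Proof. unfold den, Qx, Qy, Qc, M2inv, u1,u2,u3,u4,u5,u6,u7,u8, Cth, Cthb, C1, onei, onemi, im1, thetab, theta, CR, Cadd, Cmul, Cconj, Copp, Cnorm2, Ci, C0; simpl. dpos. Qed.

Lemma rel0 (x y r : R) : 0 < r -> 
  (den u1 - den u1 * den u1) * (x*x+y*y+r*r) + 2 * den u1 * (Qx u1 * x + Qy u1 * y) <= Qx u1 * Qx u1 + Qy u1 * Qy u1 + 1 - den u1 ->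
  (1) * (x*x+y*y+r*r) + (0)*x + (0)*y <= (26181/10000).
Proof.
  intros Hr H.
  unfold den, Qx, Qy, Qc, M2inv, u1,u2,u3,u4,u5,u6,u7,u8, Cth, Cthb, C1, onei, onemi, im1, thetab, theta, CR, Cadd, Cmul, Cconj, Copp, Cnorm2, Ci, C0 in H; simpl in H.
  relax0 x y r.
Qed.

Lemma den1 : 0 < den u2.
Proof. unfold den, Qx, Qy, Qc, M2inv, u1,u2,u3,u4,u5,u6,u7,u8, Cth, Cthb, C1, onei, onemi, im1, thetab, theta, CR, Cadd, Cmul, Cconj, Copp, Cnorm2, Ci, C0; simpl. dpos. Qed.

Lemma rel1 (x y r : R) : 0 < r -> x*x+y*y+r*r <= 26181/10000 -> 
  (den u2 - den u2 * den u2) * (x*x+y*y+r*r) + 2 * den u2 * (Qx u2 * x + Qy u2 * y) <= Qx u2 * Qx u2 + Qy u2 * Qy u2 + 1 - den u2 ->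
  (-6) * (x*x+y*y+r*r) + (12)*x + (-12)*y <= (60001/10000).
Proof.
  intros Hr Hw H.
  unfold den, Qx, Qy, Qc, M2inv, u1,u2,u3,u4,u5,u6,u7,u8, Cth, Cthb, C1, onei, onemi, im1, thetab, theta, CR, Cadd, Cmul, Cconj, Copp, Cnorm2, Ci, C0 in H; simpl in H.
  relax x y r.
Qed.

Lemma den2 : 0 < den u3.
Proof. unfold den, Qx, Qy, Qc, M2inv, u1,u2,u3,u4,u5,u6,u7,u8, Cth, Cthb, C1, onei, onemi, im1, thetab, theta, CR, Cadd, Cmul, Cconj, Copp, Cnorm2, Ci, C0; simpl. dpos. Qed.

Lemma rel2 (x y r : R) : 0 < r -> x*x+y*y+r*r <= 26181/10000 -> 
  (den u3 - den u3 * den u3) * (x*x+y*y+r*r) + 2 * den u3 * (Qx u3 * x + Qy u3 * y) <= Qx u3 * Qx u3 + Qy u3 * Qy u3 + 1 - den u3 ->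
  (-16459/5000) * (x*x+y*y+r*r) + (-4261/400)*x + (-4261/400)*y <= (86183/10000).
Proof.
  intros Hr Hw H.
  unfold den, Qx, Qy, Qc, M2inv, u1,u2,u3,u4,u5,u6,u7,u8, Cth, Cthb, C1, onei, onemi, im1, thetab, theta, CR, Cadd, Cmul, Cconj, Copp, Cnorm2, Ci, C0 in H; simpl in H.
  relax x y r.
Qed.

Lemma den3 : 0 < den u4.
Proof. unfold den, Qx, Qy, Qc, M2inv, u1,u2,u3,u4,u5,u6,u7,u8, Cth, Cthb, C1, onei, onemi, im1, thetab, theta, CR, Cadd, Cmul, Cconj, Copp, Cnorm2, Ci, C0; simpl. dpos. Qed.

Lemma rel3 (x y r : R) : 0 < r -> x*x+y*y+r*r <= 26181/10000 -> 
  (den u4 - den u4 * den u4) * (x*x+y*y+r*r) + 2 * den u4 * (Qx u4 * x + Qy u4 * y) <= Qx u4 * Qx u4 + Qy u4 * Qy u4 + 1 - den u4 ->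
  (-16459/5000) * (x*x+y*y+r*r) + (4261/400)*x + (4261/400)*y <= (86183/10000).
Proof.
  intros Hr Hw H.
  unfold den, Qx, Qy, Qc, M2inv, u1,u2,u3,u4,u5,u6,u7,u8, Cth, Cthb, C1, onei, onemi, im1, thetab, theta, CR, Cadd, Cmul, Cconj, Copp, Cnorm2, Ci, C0 in H; simpl in H.
  relax x y r.
Qed.

Lemma den4 : 0 < den u5.
Proof. unfold den, Qx, Qy, Qc, M2inv, u1,u2,u3,u4,u5,u6,u7,u8, Cth, Cthb, C1, onei, onemi, im1, thetab, theta, CR, Cadd, Cmul, Cconj, Copp, Cnorm2, Ci, C0; simpl. dpos. Qed.

Lemma rel4 (x y r : R) : 0 < r -> x*x+y*y+r*r <= 26181/10000 -> 
  (den u5 - den u5 * den u5) * (x*x+y*y+r*r) + 2 * den u5 * (Qx u5 * x + Qy u5 * y) <= Qx u5 * Qx u5 + Qy u5 * Qy u5 + 1 - den u5 ->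
  (-259443/10000) * (x*x+y*y+r*r) + (-1061/400)*x + (-475967/10000)*y <= (66911/5000).
Proof.
  intros Hr Hw H.
  unfold den, Qx, Qy, Qc, M2inv, u1,u2,u3,u4,u5,u6,u7,u8, Cth, Cthb, C1, onei, onemi, im1, thetab, theta, CR, Cadd, Cmul, Cconj, Copp, Cnorm2, Ci, C0 in H; simpl in H.
  relax x y r.
Qed.

Lemma den5 : 0 < den u6.
Proof. unfold den, Qx, Qy, Qc, M2inv, u1,u2,u3,u4,u5,u6,u7,u8, Cth, Cthb, C1, onei, onemi, im1, thetab, theta, CR, Cadd, Cmul, Cconj, Copp, Cnorm2, Ci, C0; simpl. dpos. Qed.

Lemma rel5 (x y r : R) : 0 < r -> x*x+y*y+r*r <= 26181/10000 -> 
  (den u6 - den u6 * den u6) * (x*x+y*y+r*r) + 2 * den u6 * (Qx u6 * x + Qy u6 * y) <= Qx u6 * Qx u6 + Qy u6 * Qy u6 + 1 - den u6 ->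
  (-80557/10000) * (x*x+y*y+r*r) + (11461/400)*x + (15967/10000)*y <= (19523/1250).
Proof.
  intros Hr Hw H.
  unfold den, Qx, Qy, Qc, M2inv, u1,u2,u3,u4,u5,u6,u7,u8, Cth, Cthb, C1, onei, onemi, im1, thetab, theta, CR, Cadd, Cmul, Cconj, Copp, Cnorm2, Ci, C0 in H; simpl in H.
  relax x y r.
Qed.

Lemma den6 : 0 < den u7.
Proof. unfold den, Qx, Qy, Qc, M2inv, u1,u2,u3,u4,u5,u6,u7,u8, Cth, Cthb, C1, onei, onemi, im1, thetab, theta, CR, Cadd, Cmul, Cconj, Copp, Cnorm2, Ci, C0; simpl. dpos. Qed.

Lemma rel6 (x y r : R) : 0 < r -> x*x+y*y+r*r <= 26181/10000 -> 
  (den u7 - den u7 * den u7) * (x*x+y*y+r*r) + 2 * den u7 * (Qx u7 * x + Qy u7 * y) <= Qx u7 * Qx u7 + Qy u7 * Qy u7 + 1 - den u7 ->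
  (-259443/10000) * (x*x+y*y+r*r) + (-475967/10000)*x + (-1061/400)*y <= (66911/5000).
Proof.
  intros Hr Hw H.
  unfold den, Qx, Qy, Qc, M2inv, u1,u2,u3,u4,u5,u6,u7,u8, Cth, Cthb, C1, onei, onemi, im1, thetab, theta, CR, Cadd, Cmul, Cconj, Copp, Cnorm2, Ci, C0 in H; simpl in H.
  relax x y r.
Qed.

Lemma den7 : 0 < den u8.
Proof. unfold den, Qx, Qy, Qc, M2inv, u1,u2,u3,u4,u5,u6,u7,u8, Cth, Cthb, C1, onei, onemi, im1, thetab, theta, CR, Cadd, Cmul, Cconj, Copp, Cnorm2, Ci, C0; simpl. dpos. Qed.

Lemma rel7 (x y r : R) : 0 < r -> x*x+y*y+r*r <= 26181/10000 -> 
  (den u8 - den u8 * den u8) * (x*x+y*y+r*r) + 2 * den u8 * (Qx u8 * x + Qy u8 * y) <= Qx u8 * Qx u8 + Qy u8 * Qy u8 + 1 - den u8 ->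
  (-80557/10000) * (x*x+y*y+r*r) + (15967/10000)*x + (11461/400)*y <= (19523/1250).
Proof.
  intros Hr Hw H.
  unfold den, Qx, Qy, Qc, M2inv, u1,u2,u3,u4,u5,u6,u7,u8, Cth, Cthb, C1, onei, onemi, im1, thetab, theta, CR, Cadd, Cmul, Cconj, Copp, Cnorm2, Ci, C0 in H; simpl in H.
  relax x y r.
Qed.

Lemma den8 : 0 < den (M2inv u1).
Proof. unfold den, Qx, Qy, Qc, M2inv, u1,u2,u3,u4,u5,u6,u7,u8, Cth, Cthb, C1, onei, onemi, im1, thetab, theta, CR, Cadd, Cmul, Cconj, Copp, Cnorm2, Ci, C0; simpl. dpos. Qed.

Lemma rel8 (x y r : R) : 0 < r -> x*x+y*y+r*r <= 26181/10000 -> 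
  (den (M2inv u1) - den (M2inv u1) * den (M2inv u1)) * (x*x+y*y+r*r) + 2 * den (M2inv u1) * (Qx (M2inv u1) * x + Qy (M2inv u1) * y) <= Qx (M2inv u1) * Qx (M2inv u1) + Qy (M2inv u1) * Qy (M2inv u1) + 1 - den (M2inv u1) ->
  (-42361/10000) * (x*x+y*y+r*r) + (0)*x + (0)*y <= (-16179/10000).
Proof.
  intros Hr Hw H.
  unfold den, Qx, Qy, Qc, M2inv, u1,u2,u3,u4,u5,u6,u7,u8, Cth, Cthb, C1, onei, onemi, im1, thetab, theta, CR, Cadd, Cmul, Cconj, Copp, Cnorm2, Ci, C0 in H; simpl in H.
  relax x y r.
Qed.

Lemma den9 : 0 < den (M2inv u2).
Proof. unfold den, Qx, Qy, Qc, M2inv, u1,u2,u3,u4,u5,u6,u7,u8, Cth, Cthb, C1, onei, onemi, im1, thetab, theta, CR, Cadd, Cmul, Cconj, Copp, Cnorm2, Ci, C0; simpl. dpos. Qed.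

Lemma rel9 (x y r : R) : 0 < r -> x*x+y*y+r*r <= 26181/10000 -> 
  (den (M2inv u2) - den (M2inv u2) * den (M2inv u2)) * (x*x+y*y+r*r) + 2 * den (M2inv u2) * (Qx (M2inv u2) * x + Qy (M2inv u2) * y) <= Qx (M2inv u2) * Qx (M2inv u2) + Qy (M2inv u2) * Qy (M2inv u2) + 1 - den (M2inv u2) ->
  (-6) * (x*x+y*y+r*r) + (-12)*x + (12)*y <= (60001/10000).
Proof.
  intros Hr Hw H.
  unfold den, Qx, Qy, Qc, M2inv, u1,u2,u3,u4,u5,u6,u7,u8, Cth, Cthb, C1, onei, onemi, im1, thetab, theta, CR, Cadd, Cmul, Cconj, Copp, Cnorm2, Ci, C0 in H; simpl in H.
  relax x y r.
Qed.

Lemma den10 : 0 < den (M2inv u3).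
Proof. unfold den, Qx, Qy, Qc, M2inv, u1,u2,u3,u4,u5,u6,u7,u8, Cth, Cthb, C1, onei, onemi, im1, thetab, theta, CR, Cadd, Cmul, Cconj, Copp, Cnorm2, Ci, C0; simpl. dpos. Qed.

Lemma rel10 (x y r : R) : 0 < r -> x*x+y*y+r*r <= 26181/10000 -> 
  (den (M2inv u3) - den (M2inv u3) * den (M2inv u3)) * (x*x+y*y+r*r) + 2 * den (M2inv u3) * (Qx (M2inv u3) * x + Qy (M2inv u3) * y) <= Qx (M2inv u3) * Qx (M2inv u3) + Qy (M2inv u3) * Qy (M2inv u3) + 1 - den (M2inv u3) ->
  (-83541/5000) * (x*x+y*y+r*r) + (-8261/400)*x + (-8261/400)*y <= (31911/5000).
Proof.
  intros Hr Hw H.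
  unfold den, Qx, Qy, Qc, M2inv, u1,u2,u3,u4,u5,u6,u7,u8, Cth, Cthb, C1, onei, onemi, im1, thetab, theta, CR, Cadd, Cmul, Cconj, Copp, Cnorm2, Ci, C0 in H; simpl in H.
  relax x y r.
Qed.

Lemma den11 : 0 < den (M2inv u4).
Proof. unfold den, Qx, Qy, Qc, M2inv, u1,u2,u3,u4,u5,u6,u7,u8, Cth, Cthb, C1, onei, onemi, im1, thetab, theta, CR, Cadd, Cmul, Cconj, Copp, Cnorm2, Ci, C0; simpl. dpos. Qed.

Lemma rel11 (x y r : R) : 0 < r -> x*x+y*y+r*r <= 26181/10000 -> 
  (den (M2inv u4) - den (M2inv u4) * den (M2inv u4)) * (x*x+y*y+r*r) + 2 * den (M2inv u4) * (Qx (M2inv u4) * x + Qy (M2inv u4) * y) <= Qx (M2inv u4) * Qx (M2inv u4) + Qy (M2inv u4) * Qy (M2inv u4) + 1 - den (M2inv u4) ->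
  (-83541/5000) * (x*x+y*y+r*r) + (8261/400)*x + (8261/400)*y <= (31911/5000).
Proof.
  intros Hr Hw H.
  unfold den, Qx, Qy, Qc, M2inv, u1,u2,u3,u4,u5,u6,u7,u8, Cth, Cthb, C1, onei, onemi, im1, thetab, theta, CR, Cadd, Cmul, Cconj, Copp, Cnorm2, Ci, C0 in H; simpl in H.
  relax x y r.
Qed.

Lemma den12 : 0 < den (M2inv u5).
Proof. unfold den, Qx, Qy, Qc, M2inv, u1,u2,u3,u4,u5,u6,u7,u8, Cth, Cthb, C1, onei, onemi, im1, thetab, theta, CR, Cadd, Cmul, Cconj, Copp, Cnorm2, Ci, C0; simpl. dpos. Qed.

Lemma rel12 (x y r : R) : 0 < r -> x*x+y*y+r*r <= 26181/10000 -> 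
  (den (M2inv u5) - den (M2inv u5) * den (M2inv u5)) * (x*x+y*y+r*r) + 2 * den (M2inv u5) * (Qx (M2inv u5) * x + Qy (M2inv u5) * y) <= Qx (M2inv u5) * Qx (M2inv u5) + Qy (M2inv u5) * Qy (M2inv u5) + 1 - den (M2inv u5) ->
  (-259443/10000) * (x*x+y*y+r*r) + (1061/400)*x + (475967/10000)*y <= (66911/5000).
Proof.
  intros Hr Hw H.
  unfold den, Qx, Qy, Qc, M2inv, u1,u2,u3,u4,u5,u6,u7,u8, Cth, Cthb, C1, onei, onemi, im1, thetab, theta, CR, Cadd, Cmul, Cconj, Copp, Cnorm2, Ci, C0 in H; simpl in H.
  relax x y r.
Qed.

Lemma den13 : 0 < den (M2inv u6).
Proof. unfold den, Qx, Qy, Qc, M2inv, u1,u2,u3,u4,u5,u6,u7,u8, Cth, Cthb, C1, onei, onemi, im1, thetab, theta, CR, Cadd, Cmul, Cconj, Copp, Cnorm2, Ci, C0; simpl. dpos. Qed.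

Lemma rel13 (x y r : R) : 0 < r -> x*x+y*y+r*r <= 26181/10000 -> 
  (den (M2inv u6) - den (M2inv u6) * den (M2inv u6)) * (x*x+y*y+r*r) + 2 * den (M2inv u6) * (Qx (M2inv u6) * x + Qy (M2inv u6) * y) <= Qx (M2inv u6) * Qx (M2inv u6) + Qy (M2inv u6) * Qy (M2inv u6) + 1 - den (M2inv u6) ->
  (-80557/10000) * (x*x+y*y+r*r) + (-11461/400)*x + (-15967/10000)*y <= (19523/1250).
Proof.
  intros Hr Hw H.
  unfold den, Qx, Qy, Qc, M2inv, u1,u2,u3,u4,u5,u6,u7,u8, Cth, Cthb, C1, onei, onemi, im1, thetab, theta, CR, Cadd, Cmul, Cconj, Copp, Cnorm2, Ci, C0 in H; simpl in H.
  relax x y r.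
Qed.

Lemma den14 : 0 < den (M2inv u7).
Proof. unfold den, Qx, Qy, Qc, M2inv, u1,u2,u3,u4,u5,u6,u7,u8, Cth, Cthb, C1, onei, onemi, im1, thetab, theta, CR, Cadd, Cmul, Cconj, Copp, Cnorm2, Ci, C0; simpl. dpos. Qed.

Lemma rel14 (x y r : R) : 0 < r -> x*x+y*y+r*r <= 26181/10000 -> 
  (den (M2inv u7) - den (M2inv u7) * den (M2inv u7)) * (x*x+y*y+r*r) + 2 * den (M2inv u7) * (Qx (M2inv u7) * x + Qy (M2inv u7) * y) <= Qx (M2inv u7) * Qx (M2inv u7) + Qy (M2inv u7) * Qy (M2inv u7) + 1 - den (M2inv u7) ->
  (-259443/10000) * (x*x+y*y+r*r) + (475967/10000)*x + (1061/400)*y <= (66911/5000).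
Proof.
  intros Hr Hw H.
  unfold den, Qx, Qy, Qc, M2inv, u1,u2,u3,u4,u5,u6,u7,u8, Cth, Cthb, C1, onei, onemi, im1, thetab, theta, CR, Cadd, Cmul, Cconj, Copp, Cnorm2, Ci, C0 in H; simpl in H.
  relax x y r.
Qed.

Lemma den15 : 0 < den (M2inv u8).
Proof. unfold den, Qx, Qy, Qc, M2inv, u1,u2,u3,u4,u5,u6,u7,u8, Cth, Cthb, C1, onei, onemi, im1, thetab, theta, CR, Cadd, Cmul, Cconj, Copp, Cnorm2, Ci, C0; simpl. dpos. Qed.

Lemma rel15 (x y r : R) : 0 < r -> x*x+y*y+r*r <= 26181/10000 -> 
  (den (M2inv u8) - den (M2inv u8) * den (M2inv u8)) * (x*x+y*y+r*r) + 2 * den (M2inv u8) * (Qx (M2inv u8) * x + Qy (M2inv u8) * y) <= Qx (M2inv u8) * Qx (M2inv u8) + Qy (M2inv u8) * Qy (M2inv u8) + 1 - den (M2inv u8) ->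
  (-80557/10000) * (x*x+y*y+r*r) + (-15967/10000)*x + (-11461/400)*y <= (19523/1250).
Proof.
  intros Hr Hw H.
  unfold den, Qx, Qy, Qc, M2inv, u1,u2,u3,u4,u5,u6,u7,u8, Cth, Cthb, C1, onei, onemi, im1, thetab, theta, CR, Cadd, Cmul, Cconj, Copp, Cnorm2, Ci, C0 in H; simpl in H.
  relax x y r.
Qed.

Definition zbox : box := mkBox 0 0 0 0 1 1.

Lemma lo_l a r : 0 <= a -> 0 < r -> a*a <= r*r -> a <= r.
Proof. intros. nra. Qed.
Lemma hi_l a r : 0 <= a -> 0 < r -> r*r <= a*a -> r <= a.
Proof. intros. nra. Qed.

Ltac cellt x y r x1 x2 y1 y2 mx my :=
  assert (0 <= (x - x1)*(x2 - x)) by (apply Rmult_le_pos; lra);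
  assert (0 <= (y - y1)*(y2 - y)) by (apply Rmult_le_pos; lra);
  assert (0 <= (x - mx)*(x - mx)) by apply Rle_0_sqr;
  assert (0 <= (y - my)*(y - my)) by apply Rle_0_sqr;
  unfold in_box; simpl; split; [lra|split;[lra|]];
  split; [apply lo_l; lra | apply hi_l; lra].
Definition BL : list box := [
  mkBox (-567/400) (-243/200) (-81/200) (-81/400) (459/500) (1051/1000);
  mkBox (-567/400) (-243/200) (-81/400) (0) (951/1000) (107/100);
  mkBox (-567/400) (-243/200) (0) (81/400) (907/1000) (107/100);
  mkBox (-567/400) (-243/200) (81/400) (81/200) (813/1000) (1051/1000);
  mkBox (-567/400) (-243/200) (81/200) (243/400) (791/1000) (99/100);
  mkBox (-243/200) (-81/80) (-243/400) (-81/200) (441/500) (1197/1000);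
  mkBox (-243/200) (-81/80) (-81/200) (-81/400) (763/1000) (1247/1000);
  mkBox (-243/200) (-81/80) (-81/400) (0) (797/1000) (1263/1000);
  mkBox (-243/200) (-81/80) (0) (81/400) (149/200) (1263/1000);
  mkBox (-243/200) (-81/80) (81/400) (81/200) (87/125) (1247/1000);
  mkBox (-243/200) (-81/80) (81/200) (243/400) (779/1000) (1197/1000);
  mkBox (-243/200) (-81/80) (243/400) (81/100) (893/1000) (277/250);
  mkBox (-81/80) (-81/100) (-81/100) (-243/400) (971/1000) (1263/1000);
  mkBox (-81/80) (-81/100) (-243/400) (-81/200) (701/1000) (671/500);
  mkBox (-81/80) (-81/100) (-81/200) (-81/400) (49/100) (1387/1000);
  mkBox (-81/80) (-81/100) (-81/400) (0) (541/1000) (701/500);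
  mkBox (-81/80) (-81/100) (0) (81/400) (64/125) (701/500);
  mkBox (-81/80) (-81/100) (81/400) (81/200) (571/1000) (1387/1000);
  mkBox (-81/80) (-81/100) (81/200) (243/400) (39/50) (671/500);
  mkBox (-81/80) (-81/100) (243/400) (81/100) (899/1000) (1263/1000);
  mkBox (-81/80) (-81/100) (81/100) (81/80) (481/500) (143/125);
  mkBox (-81/100) (-243/400) (-81/80) (-81/100) (971/1000) (1263/1000);
  mkBox (-81/100) (-243/400) (-81/100) (-243/400) (379/500) (343/250);
  mkBox (-81/100) (-243/400) (-243/400) (-81/200) (281/500) (289/200);
  mkBox (-81/100) (-243/400) (-81/200) (-81/400) (57/125) (1487/1000);
  mkBox (-81/100) (-243/400) (-81/400) (0) (57/125) (1501/1000);
  mkBox (-81/100) (-243/400) (0) (81/400) (83/200) (1501/1000);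
  mkBox (-81/100) (-243/400) (81/400) (81/200) (457/1000) (1487/1000);
  mkBox (-81/100) (-243/400) (81/200) (243/400) (7/10) (289/200);
  mkBox (-81/100) (-243/400) (243/400) (81/100) (831/1000) (343/250);
  mkBox (-81/100) (-243/400) (81/100) (81/80) (899/1000) (1263/1000);
  mkBox (-81/100) (-243/400) (81/80) (243/200) (893/1000) (277/250);
  mkBox (-243/400) (-81/200) (-243/200) (-81/80) (441/500) (1197/1000);
  mkBox (-243/400) (-81/200) (-81/80) (-81/100) (701/1000) (671/500);
  mkBox (-243/400) (-81/200) (-81/100) (-243/400) (281/500) (289/200);
  mkBox (-243/400) (-81/200) (-243/400) (-81/200) (269/500) (757/500);
  mkBox (-243/400) (-81/200) (-81/200) (-81/400) (203/500) (777/500);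
  mkBox (-243/400) (-81/200) (-81/400) (0) (167/500) (196/125);
  mkBox (-243/400) (-81/200) (0) (81/400) (143/500) (196/125);
  mkBox (-243/400) (-81/200) (81/400) (81/200) (151/500) (777/500);
  mkBox (-243/400) (-81/200) (81/200) (243/400) (539/1000) (757/500);
  mkBox (-243/400) (-81/200) (243/400) (81/100) (7/10) (289/200);
  mkBox (-243/400) (-81/200) (81/100) (81/80) (39/50) (671/500);
  mkBox (-243/400) (-81/200) (81/80) (243/200) (779/1000) (1197/1000);
  mkBox (-243/400) (-81/200) (243/200) (567/400) (791/1000) (99/100);
  mkBox (-81/200) (-81/400) (-567/400) (-243/200) (459/500) (1051/1000);
  mkBox (-81/200) (-81/400) (-243/200) (-81/80) (763/1000) (1247/1000);
  mkBox (-81/200) (-81/400) (-81/80) (-81/100) (49/100) (1387/1000);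
  mkBox (-81/200) (-81/400) (-81/100) (-243/400) (57/125) (1487/1000);
  mkBox (-81/200) (-81/400) (-243/400) (-81/200) (203/500) (777/500);
  mkBox (-81/200) (-81/400) (-81/200) (-81/400) (411/1000) (797/500);
  mkBox (-81/200) (-81/400) (-81/400) (0) (419/1000) (803/500);
  mkBox (-81/200) (-81/400) (0) (81/400) (419/1000) (803/500);
  mkBox (-81/200) (-81/400) (81/400) (81/200) (353/1000) (797/500);
  mkBox (-81/200) (-81/400) (81/200) (243/400) (151/500) (777/500);
  mkBox (-81/200) (-81/400) (243/400) (81/100) (457/1000) (1487/1000);
  mkBox (-81/200) (-81/400) (81/100) (81/80) (571/1000) (1387/1000);
  mkBox (-81/200) (-81/400) (81/80) (243/200) (87/125) (1247/1000);
  mkBox (-81/200) (-81/400) (243/200) (567/400) (813/1000) (1051/1000);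
  mkBox (-81/400) (0) (-567/400) (-243/200) (951/1000) (107/100);
  mkBox (-81/400) (0) (-243/200) (-81/80) (797/1000) (1263/1000);
  mkBox (-81/400) (0) (-81/80) (-81/100) (541/1000) (701/500);
  mkBox (-81/400) (0) (-81/100) (-243/400) (57/125) (1501/1000);
  mkBox (-81/400) (0) (-243/400) (-81/200) (167/500) (196/125);
  mkBox (-81/400) (0) (-81/200) (-81/400) (419/1000) (803/500);
  mkBox (-81/400) (0) (-81/400) (0) (273/500) (1619/1000);
  mkBox (-81/400) (0) (0) (81/400) (273/500) (1619/1000);
  mkBox (-81/400) (0) (81/400) (81/200) (419/1000) (803/500);
  mkBox (-81/400) (0) (81/200) (243/400) (143/500) (196/125);
  mkBox (-81/400) (0) (243/400) (81/100) (83/200) (1501/1000);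
  mkBox (-81/400) (0) (81/100) (81/80) (64/125) (701/500);
  mkBox (-81/400) (0) (81/80) (243/200) (149/200) (1263/1000);
  mkBox (-81/400) (0) (243/200) (567/400) (907/1000) (107/100);
  mkBox (0) (81/400) (-567/400) (-243/200) (907/1000) (107/100);
  mkBox (0) (81/400) (-243/200) (-81/80) (149/200) (1263/1000);
  mkBox (0) (81/400) (-81/80) (-81/100) (64/125) (701/500);
  mkBox (0) (81/400) (-81/100) (-243/400) (83/200) (1501/1000);
  mkBox (0) (81/400) (-243/400) (-81/200) (143/500) (196/125);
  mkBox (0) (81/400) (-81/200) (-81/400) (419/1000) (803/500);
  mkBox (0) (81/400) (-81/400) (0) (273/500) (1619/1000);
  mkBox (0) (81/400) (0) (81/400) (273/500) (1619/1000);
  mkBox (0) (81/400) (81/400) (81/200) (419/1000) (803/500);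
  mkBox (0) (81/400) (81/200) (243/400) (167/500) (196/125);
  mkBox (0) (81/400) (243/400) (81/100) (57/125) (1501/1000);
  mkBox (0) (81/400) (81/100) (81/80) (541/1000) (701/500);
  mkBox (0) (81/400) (81/80) (243/200) (797/1000) (1263/1000);
  mkBox (0) (81/400) (243/200) (567/400) (951/1000) (107/100);
  mkBox (81/400) (81/200) (-567/400) (-243/200) (813/1000) (1051/1000);
  mkBox (81/400) (81/200) (-243/200) (-81/80) (87/125) (1247/1000);
  mkBox (81/400) (81/200) (-81/80) (-81/100) (571/1000) (1387/1000);
  mkBox (81/400) (81/200) (-81/100) (-243/400) (457/1000) (1487/1000);
  mkBox (81/400) (81/200) (-243/400) (-81/200) (151/500) (777/500);
  mkBox (81/400) (81/200) (-81/200) (-81/400) (353/1000) (797/500);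
  mkBox (81/400) (81/200) (-81/400) (0) (419/1000) (803/500);
  mkBox (81/400) (81/200) (0) (81/400) (419/1000) (803/500);
  mkBox (81/400) (81/200) (81/400) (81/200) (411/1000) (797/500);
  mkBox (81/400) (81/200) (81/200) (243/400) (203/500) (777/500);
  mkBox (81/400) (81/200) (243/400) (81/100) (57/125) (1487/1000);
  mkBox (81/400) (81/200) (81/100) (81/80) (49/100) (1387/1000);
  mkBox (81/400) (81/200) (81/80) (243/200) (763/1000) (1247/1000);
  mkBox (81/400) (81/200) (243/200) (567/400) (459/500) (1051/1000);
  mkBox (81/200) (243/400) (-567/400) (-243/200) (791/1000) (99/100);
  mkBox (81/200) (243/400) (-243/200) (-81/80) (779/1000) (1197/1000);
  mkBox (81/200) (243/400) (-81/80) (-81/100) (39/50) (671/500);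
  mkBox (81/200) (243/400) (-81/100) (-243/400) (7/10) (289/200);
  mkBox (81/200) (243/400) (-243/400) (-81/200) (539/1000) (757/500);
  mkBox (81/200) (243/400) (-81/200) (-81/400) (151/500) (777/500);
  mkBox (81/200) (243/400) (-81/400) (0) (143/500) (196/125);
  mkBox (81/200) (243/400) (0) (81/400) (167/500) (196/125);
  mkBox (81/200) (243/400) (81/400) (81/200) (203/500) (777/500);
  mkBox (81/200) (243/400) (81/200) (243/400) (269/500) (757/500);
  mkBox (81/200) (243/400) (243/400) (81/100) (281/500) (289/200);
  mkBox (81/200) (243/400) (81/100) (81/80) (701/1000) (671/500);
  mkBox (81/200) (243/400) (81/80) (243/200) (441/500) (1197/1000);
  mkBox (243/400) (81/100) (-243/200) (-81/80) (893/1000) (277/250);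
  mkBox (243/400) (81/100) (-81/80) (-81/100) (899/1000) (1263/1000);
  mkBox (243/400) (81/100) (-81/100) (-243/400) (831/1000) (343/250);
  mkBox (243/400) (81/100) (-243/400) (-81/200) (7/10) (289/200);
  mkBox (243/400) (81/100) (-81/200) (-81/400) (457/1000) (1487/1000);
  mkBox (243/400) (81/100) (-81/400) (0) (83/200) (1501/1000);
  mkBox (243/400) (81/100) (0) (81/400) (57/125) (1501/1000);
  mkBox (243/400) (81/100) (81/400) (81/200) (57/125) (1487/1000);
  mkBox (243/400) (81/100) (81/200) (243/400) (281/500) (289/200);
  mkBox (243/400) (81/100) (243/400) (81/100) (379/500) (343/250);
  mkBox (243/400) (81/100) (81/100) (81/80) (971/1000) (1263/1000);
  mkBox (81/100) (81/80) (-81/80) (-81/100) (481/500) (143/125);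
  mkBox (81/100) (81/80) (-81/100) (-243/400) (899/1000) (1263/1000);
  mkBox (81/100) (81/80) (-243/400) (-81/200) (39/50) (671/500);
  mkBox (81/100) (81/80) (-81/200) (-81/400) (571/1000) (1387/1000);
  mkBox (81/100) (81/80) (-81/400) (0) (64/125) (701/500);
  mkBox (81/100) (81/80) (0) (81/400) (541/1000) (701/500);
  mkBox (81/100) (81/80) (81/400) (81/200) (49/100) (1387/1000);
  mkBox (81/100) (81/80) (81/200) (243/400) (701/1000) (671/500);
  mkBox (81/100) (81/80) (243/400) (81/100) (971/1000) (1263/1000);
  mkBox (81/80) (243/200) (-81/100) (-243/400) (893/1000) (277/250);
  mkBox (81/80) (243/200) (-243/400) (-81/200) (779/1000) (1197/1000);
  mkBox (81/80) (243/200) (-81/200) (-81/400) (87/125) (1247/1000);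
  mkBox (81/80) (243/200) (-81/400) (0) (149/200) (1263/1000);
  mkBox (81/80) (243/200) (0) (81/400) (797/1000) (1263/1000);
  mkBox (81/80) (243/200) (81/400) (81/200) (763/1000) (1247/1000);
  mkBox (81/80) (243/200) (81/200) (243/400) (441/500) (1197/1000);
  mkBox (243/200) (567/400) (-243/400) (-81/200) (791/1000) (99/100);
  mkBox (243/200) (567/400) (-81/200) (-81/400) (813/1000) (1051/1000);
  mkBox (243/200) (567/400) (-81/400) (0) (907/1000) (107/100);
  mkBox (243/200) (567/400) (0) (81/400) (951/1000) (107/100);
  mkBox (243/200) (567/400) (81/400) (81/200) (459/500) (1051/1000)
].
Lemma cover_pt (x y r : R) : 0 < r ->
  (1) * (x*x+y*y+r*r) + (0)*x + (0)*y <= (26181/10000) ->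
  (-6) * (x*x+y*y+r*r) + (12)*x + (-12)*y <= (60001/10000) ->
  (-16459/5000) * (x*x+y*y+r*r) + (-4261/400)*x + (-4261/400)*y <= (86183/10000) ->
  (-16459/5000) * (x*x+y*y+r*r) + (4261/400)*x + (4261/400)*y <= (86183/10000) ->
  (-259443/10000) * (x*x+y*y+r*r) + (-1061/400)*x + (-475967/10000)*y <= (66911/5000) ->
  (-80557/10000) * (x*x+y*y+r*r) + (11461/400)*x + (15967/10000)*y <= (19523/1250) ->
  (-259443/10000) * (x*x+y*y+r*r) + (-475967/10000)*x + (-1061/400)*y <= (66911/5000) ->
  (-80557/10000) * (x*x+y*y+r*r) + (15967/10000)*x + (11461/400)*y <= (19523/1250) ->
  (-42361/10000) * (x*x+y*y+r*r) + (0)*x + (0)*y <= (-16179/10000) ->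
  (-6) * (x*x+y*y+r*r) + (-12)*x + (12)*y <= (60001/10000) ->
  (-83541/5000) * (x*x+y*y+r*r) + (-8261/400)*x + (-8261/400)*y <= (31911/5000) ->
  (-83541/5000) * (x*x+y*y+r*r) + (8261/400)*x + (8261/400)*y <= (31911/5000) ->
  (-259443/10000) * (x*x+y*y+r*r) + (1061/400)*x + (475967/10000)*y <= (66911/5000) ->
  (-80557/10000) * (x*x+y*y+r*r) + (-11461/400)*x + (-15967/10000)*y <= (19523/1250) ->
  (-259443/10000) * (x*x+y*y+r*r) + (475967/10000)*x + (1061/400)*y <= (66911/5000) ->
  (-80557/10000) * (x*x+y*y+r*r) + (-15967/10000)*x + (-11461/400)*y <= (19523/1250) ->
  exists n, in_box (nth n BL zbox) (mkPt (mkC x y) r).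
Proof.
  intros Hr H0 H1 H2 H3 H4 H5 H6 H7 H8 H9 H10 H11 H12 H13 H14 H15.
  assert (Hx : -162/100 <= x <= 162/100) by (apply bsq; nra).
  assert (Hy : -162/100 <= y <= 162/100) by (apply bsq; nra).
destruct (Rle_lt_dec x (-567/400)).
{ destruct (Rle_lt_dec y (-567/400)).
{ exfalso; lra. }
destruct (Rle_lt_dec y (-243/200)).
{ exfalso; lra. }
destruct (Rle_lt_dec y (-81/80)).
{ exfalso; lra. }
destruct (Rle_lt_dec y (-81/100)).
{ exfalso; lra. }
destruct (Rle_lt_dec y (-243/400)).
{ exfalso; lra. }
destruct (Rle_lt_dec y (-81/200)).
{ exfalso; lra. }
destruct (Rle_lt_dec y (-81/400)).
{ exfalso; lra. }
destruct (Rle_lt_dec y (0)).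
{ exfalso; lra. }
destruct (Rle_lt_dec y (81/400)).
{ exfalso; lra. }
destruct (Rle_lt_dec y (81/200)).
{ exfalso; lra. }
destruct (Rle_lt_dec y (243/400)).
{ exfalso; lra. }
destruct (Rle_lt_dec y (81/100)).
{ exfalso; lra. }
destruct (Rle_lt_dec y (81/80)).
{ exfalso; lra. }
destruct (Rle_lt_dec y (243/200)).
{ exfalso; lra. }
destruct (Rle_lt_dec y (567/400)).
{ exfalso; lra. }
exfalso; lra. }
destruct (Rle_lt_dec x (-243/200)).
{ destruct (Rle_lt_dec y (-567/400)).
{ exfalso; lra. }
destruct (Rle_lt_dec y (-243/200)).
{ exfalso; lra. }
destruct (Rle_lt_dec y (-81/80)).
{ exfalso; lra. }
destruct (Rle_lt_dec y (-81/100)).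
{ exfalso; lra. }
destruct (Rle_lt_dec y (-243/400)).
{ exfalso; lra. }
destruct (Rle_lt_dec y (-81/200)).
{ exfalso; lra. }
destruct (Rle_lt_dec y (-81/400)).
{ exists 0%nat; cellt x y r (-567/400) (-243/200) (-81/200) (-81/400) (-243/200) (-81/400). }
destruct (Rle_lt_dec y (0)).
{ exists 1%nat; cellt x y r (-567/400) (-243/200) (-81/400) (0) (-243/200) (0). }
destruct (Rle_lt_dec y (81/400)).
{ exists 2%nat; cellt x y r (-567/400) (-243/200) (0) (81/400) (-243/200) (0). }
destruct (Rle_lt_dec y (81/200)).
{ exists 3%nat; cellt x y r (-567/400) (-243/200) (81/400) (81/200) (-243/200) (81/400). }
destruct (Rle_lt_dec y (243/400)).
{ exists 4%nat; cellt x y r (-567/400) (-243/200) (81/200) (243/400) (-243/200) (81/200). }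
destruct (Rle_lt_dec y (81/100)).
{ exfalso; lra. }
destruct (Rle_lt_dec y (81/80)).
{ exfalso; lra. }
destruct (Rle_lt_dec y (243/200)).
{ exfalso; lra. }
destruct (Rle_lt_dec y (567/400)).
{ exfalso; lra. }
exfalso; lra. }
destruct (Rle_lt_dec x (-81/80)).
{ destruct (Rle_lt_dec y (-567/400)).
{ exfalso; lra. }
destruct (Rle_lt_dec y (-243/200)).
{ exfalso; lra. }
destruct (Rle_lt_dec y (-81/80)).
{ exfalso; lra. }
destruct (Rle_lt_dec y (-81/100)).
{ exfalso; lra. }
destruct (Rle_lt_dec y (-243/400)).
{ exfalso; lra. }
destruct (Rle_lt_dec y (-81/200)).
{ exists 5%nat; cellt x y r (-243/200) (-81/80) (-243/400) (-81/200) (-81/80) (-81/200). }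
destruct (Rle_lt_dec y (-81/400)).
{ exists 6%nat; cellt x y r (-243/200) (-81/80) (-81/200) (-81/400) (-81/80) (-81/400). }
destruct (Rle_lt_dec y (0)).
{ exists 7%nat; cellt x y r (-243/200) (-81/80) (-81/400) (0) (-81/80) (0). }
destruct (Rle_lt_dec y (81/400)).
{ exists 8%nat; cellt x y r (-243/200) (-81/80) (0) (81/400) (-81/80) (0). }
destruct (Rle_lt_dec y (81/200)).
{ exists 9%nat; cellt x y r (-243/200) (-81/80) (81/400) (81/200) (-81/80) (81/400). }
destruct (Rle_lt_dec y (243/400)).
{ exists 10%nat; cellt x y r (-243/200) (-81/80) (81/200) (243/400) (-81/80) (81/200). }
destruct (Rle_lt_dec y (81/100)).
{ exists 11%nat; cellt x y r (-243/200) (-81/80) (243/400) (81/100) (-81/80) (243/400). }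
destruct (Rle_lt_dec y (81/80)).
{ exfalso; lra. }
destruct (Rle_lt_dec y (243/200)).
{ exfalso; lra. }
destruct (Rle_lt_dec y (567/400)).
{ exfalso; lra. }
exfalso; lra. }
destruct (Rle_lt_dec x (-81/100)).
{ destruct (Rle_lt_dec y (-567/400)).
{ exfalso; lra. }
destruct (Rle_lt_dec y (-243/200)).
{ exfalso; lra. }
destruct (Rle_lt_dec y (-81/80)).
{ exfalso; lra. }
destruct (Rle_lt_dec y (-81/100)).
{ exfalso; lra. }
destruct (Rle_lt_dec y (-243/400)).
{ exists 12%nat; cellt x y r (-81/80) (-81/100) (-81/100) (-243/400) (-81/100) (-243/400). }
destruct (Rle_lt_dec y (-81/200)).
{ exists 13%nat; cellt x y r (-81/80) (-81/100) (-243/400) (-81/200) (-81/100) (-81/200). }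
destruct (Rle_lt_dec y (-81/400)).
{ exists 14%nat; cellt x y r (-81/80) (-81/100) (-81/200) (-81/400) (-81/100) (-81/400). }
destruct (Rle_lt_dec y (0)).
{ exists 15%nat; cellt x y r (-81/80) (-81/100) (-81/400) (0) (-81/100) (0). }
destruct (Rle_lt_dec y (81/400)).
{ exists 16%nat; cellt x y r (-81/80) (-81/100) (0) (81/400) (-81/100) (0). }
destruct (Rle_lt_dec y (81/200)).
{ exists 17%nat; cellt x y r (-81/80) (-81/100) (81/400) (81/200) (-81/100) (81/400). }
destruct (Rle_lt_dec y (243/400)).
{ exists 18%nat; cellt x y r (-81/80) (-81/100) (81/200) (243/400) (-81/100) (81/200). }
destruct (Rle_lt_dec y (81/100)).
{ exists 19%nat; cellt x y r (-81/80) (-81/100) (243/400) (81/100) (-81/100) (243/400). }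
destruct (Rle_lt_dec y (81/80)).
{ exists 20%nat; cellt x y r (-81/80) (-81/100) (81/100) (81/80) (-81/100) (81/100). }
destruct (Rle_lt_dec y (243/200)).
{ exfalso; lra. }
destruct (Rle_lt_dec y (567/400)).
{ exfalso; lra. }
exfalso; lra. }
destruct (Rle_lt_dec x (-243/400)).
{ destruct (Rle_lt_dec y (-567/400)).
{ exfalso; lra. }
destruct (Rle_lt_dec y (-243/200)).
{ exfalso; lra. }
destruct (Rle_lt_dec y (-81/80)).
{ exfalso; lra. }
destruct (Rle_lt_dec y (-81/100)).
{ exists 21%nat; cellt x y r (-81/100) (-243/400) (-81/80) (-81/100) (-243/400) (-81/100). }
destruct (Rle_lt_dec y (-243/400)).
{ exists 22%nat; cellt x y r (-81/100) (-243/400) (-81/100) (-243/400) (-243/400) (-243/400). }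
destruct (Rle_lt_dec y (-81/200)).
{ exists 23%nat; cellt x y r (-81/100) (-243/400) (-243/400) (-81/200) (-243/400) (-81/200). }
destruct (Rle_lt_dec y (-81/400)).
{ exists 24%nat; cellt x y r (-81/100) (-243/400) (-81/200) (-81/400) (-243/400) (-81/400). }
destruct (Rle_lt_dec y (0)).
{ exists 25%nat; cellt x y r (-81/100) (-243/400) (-81/400) (0) (-243/400) (0). }
destruct (Rle_lt_dec y (81/400)).
{ exists 26%nat; cellt x y r (-81/100) (-243/400) (0) (81/400) (-243/400) (0). }
destruct (Rle_lt_dec y (81/200)).
{ exists 27%nat; cellt x y r (-81/100) (-243/400) (81/400) (81/200) (-243/400) (81/400). }
destruct (Rle_lt_dec y (243/400)).
{ exists 28%nat; cellt x y r (-81/100) (-243/400) (81/200) (243/400) (-243/400) (81/200). }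
destruct (Rle_lt_dec y (81/100)).
{ exists 29%nat; cellt x y r (-81/100) (-243/400) (243/400) (81/100) (-243/400) (243/400). }
destruct (Rle_lt_dec y (81/80)).
{ exists 30%nat; cellt x y r (-81/100) (-243/400) (81/100) (81/80) (-243/400) (81/100). }
destruct (Rle_lt_dec y (243/200)).
{ exists 31%nat; cellt x y r (-81/100) (-243/400) (81/80) (243/200) (-243/400) (81/80). }
destruct (Rle_lt_dec y (567/400)).
{ exfalso; lra. }
exfalso; lra. }
destruct (Rle_lt_dec x (-81/200)).
{ destruct (Rle_lt_dec y (-567/400)).
{ exfalso; lra. }
destruct (Rle_lt_dec y (-243/200)).
{ exfalso; lra. }
destruct (Rle_lt_dec y (-81/80)).
{ exists 32%nat; cellt x y r (-243/400) (-81/200) (-243/200) (-81/80) (-81/200) (-81/80). }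
destruct (Rle_lt_dec y (-81/100)).
{ exists 33%nat; cellt x y r (-243/400) (-81/200) (-81/80) (-81/100) (-81/200) (-81/100). }
destruct (Rle_lt_dec y (-243/400)).
{ exists 34%nat; cellt x y r (-243/400) (-81/200) (-81/100) (-243/400) (-81/200) (-243/400). }
destruct (Rle_lt_dec y (-81/200)).
{ exists 35%nat; cellt x y r (-243/400) (-81/200) (-243/400) (-81/200) (-81/200) (-81/200). }
destruct (Rle_lt_dec y (-81/400)).
{ exists 36%nat; cellt x y r (-243/400) (-81/200) (-81/200) (-81/400) (-81/200) (-81/400). }
destruct (Rle_lt_dec y (0)).
{ exists 37%nat; cellt x y r (-243/400) (-81/200) (-81/400) (0) (-81/200) (0). }
destruct (Rle_lt_dec y (81/400)).
{ exists 38%nat; cellt x y r (-243/400) (-81/200) (0) (81/400) (-81/200) (0). }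
destruct (Rle_lt_dec y (81/200)).
{ exists 39%nat; cellt x y r (-243/400) (-81/200) (81/400) (81/200) (-81/200) (81/400). }
destruct (Rle_lt_dec y (243/400)).
{ exists 40%nat; cellt x y r (-243/400) (-81/200) (81/200) (243/400) (-81/200) (81/200). }
destruct (Rle_lt_dec y (81/100)).
{ exists 41%nat; cellt x y r (-243/400) (-81/200) (243/400) (81/100) (-81/200) (243/400). }
destruct (Rle_lt_dec y (81/80)).
{ exists 42%nat; cellt x y r (-243/400) (-81/200) (81/100) (81/80) (-81/200) (81/100). }
destruct (Rle_lt_dec y (243/200)).
{ exists 43%nat; cellt x y r (-243/400) (-81/200) (81/80) (243/200) (-81/200) (81/80). }
destruct (Rle_lt_dec y (567/400)).
{ exists 44%nat; cellt x y r (-243/400) (-81/200) (243/200) (567/400) (-81/200) (243/200). }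
exfalso; lra. }
destruct (Rle_lt_dec x (-81/400)).
{ destruct (Rle_lt_dec y (-567/400)).
{ exfalso; lra. }
destruct (Rle_lt_dec y (-243/200)).
{ exists 45%nat; cellt x y r (-81/200) (-81/400) (-567/400) (-243/200) (-81/400) (-243/200). }
destruct (Rle_lt_dec y (-81/80)).
{ exists 46%nat; cellt x y r (-81/200) (-81/400) (-243/200) (-81/80) (-81/400) (-81/80). }
destruct (Rle_lt_dec y (-81/100)).
{ exists 47%nat; cellt x y r (-81/200) (-81/400) (-81/80) (-81/100) (-81/400) (-81/100). }
destruct (Rle_lt_dec y (-243/400)).
{ exists 48%nat; cellt x y r (-81/200) (-81/400) (-81/100) (-243/400) (-81/400) (-243/400). }
destruct (Rle_lt_dec y (-81/200)).
{ exists 49%nat; cellt x y r (-81/200) (-81/400) (-243/400) (-81/200) (-81/400) (-81/200). }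
destruct (Rle_lt_dec y (-81/400)).
{ exists 50%nat; cellt x y r (-81/200) (-81/400) (-81/200) (-81/400) (-81/400) (-81/400). }
destruct (Rle_lt_dec y (0)).
{ exists 51%nat; cellt x y r (-81/200) (-81/400) (-81/400) (0) (-81/400) (0). }
destruct (Rle_lt_dec y (81/400)).
{ exists 52%nat; cellt x y r (-81/200) (-81/400) (0) (81/400) (-81/400) (0). }
destruct (Rle_lt_dec y (81/200)).
{ exists 53%nat; cellt x y r (-81/200) (-81/400) (81/400) (81/200) (-81/400) (81/400). }
destruct (Rle_lt_dec y (243/400)).
{ exists 54%nat; cellt x y r (-81/200) (-81/400) (81/200) (243/400) (-81/400) (81/200). }
destruct (Rle_lt_dec y (81/100)).
{ exists 55%nat; cellt x y r (-81/200) (-81/400) (243/400) (81/100) (-81/400) (243/400). }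
destruct (Rle_lt_dec y (81/80)).
{ exists 56%nat; cellt x y r (-81/200) (-81/400) (81/100) (81/80) (-81/400) (81/100). }
destruct (Rle_lt_dec y (243/200)).
{ exists 57%nat; cellt x y r (-81/200) (-81/400) (81/80) (243/200) (-81/400) (81/80). }
destruct (Rle_lt_dec y (567/400)).
{ exists 58%nat; cellt x y r (-81/200) (-81/400) (243/200) (567/400) (-81/400) (243/200). }
exfalso; lra. }
destruct (Rle_lt_dec x (0)).
{ destruct (Rle_lt_dec y (-567/400)).
{ exfalso; lra. }
destruct (Rle_lt_dec y (-243/200)).
{ exists 59%nat; cellt x y r (-81/400) (0) (-567/400) (-243/200) (0) (-243/200). }
destruct (Rle_lt_dec y (-81/80)).
{ exists 60%nat; cellt x y r (-81/400) (0) (-243/200) (-81/80) (0) (-81/80). }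
destruct (Rle_lt_dec y (-81/100)).
{ exists 61%nat; cellt x y r (-81/400) (0) (-81/80) (-81/100) (0) (-81/100). }
destruct (Rle_lt_dec y (-243/400)).
{ exists 62%nat; cellt x y r (-81/400) (0) (-81/100) (-243/400) (0) (-243/400). }
destruct (Rle_lt_dec y (-81/200)).
{ exists 63%nat; cellt x y r (-81/400) (0) (-243/400) (-81/200) (0) (-81/200). }
destruct (Rle_lt_dec y (-81/400)).
{ exists 64%nat; cellt x y r (-81/400) (0) (-81/200) (-81/400) (0) (-81/400). }
destruct (Rle_lt_dec y (0)).
{ exists 65%nat; cellt x y r (-81/400) (0) (-81/400) (0) (0) (0). }
destruct (Rle_lt_dec y (81/400)).
{ exists 66%nat; cellt x y r (-81/400) (0) (0) (81/400) (0) (0). }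
destruct (Rle_lt_dec y (81/200)).
{ exists 67%nat; cellt x y r (-81/400) (0) (81/400) (81/200) (0) (81/400). }
destruct (Rle_lt_dec y (243/400)).
{ exists 68%nat; cellt x y r (-81/400) (0) (81/200) (243/400) (0) (81/200). }
destruct (Rle_lt_dec y (81/100)).
{ exists 69%nat; cellt x y r (-81/400) (0) (243/400) (81/100) (0) (243/400). }
destruct (Rle_lt_dec y (81/80)).
{ exists 70%nat; cellt x y r (-81/400) (0) (81/100) (81/80) (0) (81/100). }
destruct (Rle_lt_dec y (243/200)).
{ exists 71%nat; cellt x y r (-81/400) (0) (81/80) (243/200) (0) (81/80). }
destruct (Rle_lt_dec y (567/400)).
{ exists 72%nat; cellt x y r (-81/400) (0) (243/200) (567/400) (0) (243/200). }
exfalso; lra. }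
destruct (Rle_lt_dec x (81/400)).
{ destruct (Rle_lt_dec y (-567/400)).
{ exfalso; lra. }
destruct (Rle_lt_dec y (-243/200)).
{ exists 73%nat; cellt x y r (0) (81/400) (-567/400) (-243/200) (0) (-243/200). }
destruct (Rle_lt_dec y (-81/80)).
{ exists 74%nat; cellt x y r (0) (81/400) (-243/200) (-81/80) (0) (-81/80). }
destruct (Rle_lt_dec y (-81/100)).
{ exists 75%nat; cellt x y r (0) (81/400) (-81/80) (-81/100) (0) (-81/100). }
destruct (Rle_lt_dec y (-243/400)).
{ exists 76%nat; cellt x y r (0) (81/400) (-81/100) (-243/400) (0) (-243/400). }
destruct (Rle_lt_dec y (-81/200)).
{ exists 77%nat; cellt x y r (0) (81/400) (-243/400) (-81/200) (0) (-81/200). }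
destruct (Rle_lt_dec y (-81/400)).
{ exists 78%nat; cellt x y r (0) (81/400) (-81/200) (-81/400) (0) (-81/400). }
destruct (Rle_lt_dec y (0)).
{ exists 79%nat; cellt x y r (0) (81/400) (-81/400) (0) (0) (0). }
destruct (Rle_lt_dec y (81/400)).
{ exists 80%nat; cellt x y r (0) (81/400) (0) (81/400) (0) (0). }
destruct (Rle_lt_dec y (81/200)).
{ exists 81%nat; cellt x y r (0) (81/400) (81/400) (81/200) (0) (81/400). }
destruct (Rle_lt_dec y (243/400)).
{ exists 82%nat; cellt x y r (0) (81/400) (81/200) (243/400) (0) (81/200). }
destruct (Rle_lt_dec y (81/100)).
{ exists 83%nat; cellt x y r (0) (81/400) (243/400) (81/100) (0) (243/400). }
destruct (Rle_lt_dec y (81/80)).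
{ exists 84%nat; cellt x y r (0) (81/400) (81/100) (81/80) (0) (81/100). }
destruct (Rle_lt_dec y (243/200)).
{ exists 85%nat; cellt x y r (0) (81/400) (81/80) (243/200) (0) (81/80). }
destruct (Rle_lt_dec y (567/400)).
{ exists 86%nat; cellt x y r (0) (81/400) (243/200) (567/400) (0) (243/200). }
exfalso; lra. }
destruct (Rle_lt_dec x (81/200)).
{ destruct (Rle_lt_dec y (-567/400)).
{ exfalso; lra. }
destruct (Rle_lt_dec y (-243/200)).
{ exists 87%nat; cellt x y r (81/400) (81/200) (-567/400) (-243/200) (81/400) (-243/200). }
destruct (Rle_lt_dec y (-81/80)).
{ exists 88%nat; cellt x y r (81/400) (81/200) (-243/200) (-81/80) (81/400) (-81/80). }
destruct (Rle_lt_dec y (-81/100)).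
{ exists 89%nat; cellt x y r (81/400) (81/200) (-81/80) (-81/100) (81/400) (-81/100). }
destruct (Rle_lt_dec y (-243/400)).
{ exists 90%nat; cellt x y r (81/400) (81/200) (-81/100) (-243/400) (81/400) (-243/400). }
destruct (Rle_lt_dec y (-81/200)).
{ exists 91%nat; cellt x y r (81/400) (81/200) (-243/400) (-81/200) (81/400) (-81/200). }
destruct (Rle_lt_dec y (-81/400)).
{ exists 92%nat; cellt x y r (81/400) (81/200) (-81/200) (-81/400) (81/400) (-81/400). }
destruct (Rle_lt_dec y (0)).
{ exists 93%nat; cellt x y r (81/400) (81/200) (-81/400) (0) (81/400) (0). }
destruct (Rle_lt_dec y (81/400)).
{ exists 94%nat; cellt x y r (81/400) (81/200) (0) (81/400) (81/400) (0). }
destruct (Rle_lt_dec y (81/200)).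
{ exists 95%nat; cellt x y r (81/400) (81/200) (81/400) (81/200) (81/400) (81/400). }
destruct (Rle_lt_dec y (243/400)).
{ exists 96%nat; cellt x y r (81/400) (81/200) (81/200) (243/400) (81/400) (81/200). }
destruct (Rle_lt_dec y (81/100)).
{ exists 97%nat; cellt x y r (81/400) (81/200) (243/400) (81/100) (81/400) (243/400). }
destruct (Rle_lt_dec y (81/80)).
{ exists 98%nat; cellt x y r (81/400) (81/200) (81/100) (81/80) (81/400) (81/100). }
destruct (Rle_lt_dec y (243/200)).
{ exists 99%nat; cellt x y r (81/400) (81/200) (81/80) (243/200) (81/400) (81/80). }
destruct (Rle_lt_dec y (567/400)).
{ exists 100%nat; cellt x y r (81/400) (81/200) (243/200) (567/400) (81/400) (243/200). }
exfalso; lra. }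
destruct (Rle_lt_dec x (243/400)).
{ destruct (Rle_lt_dec y (-567/400)).
{ exfalso; lra. }
destruct (Rle_lt_dec y (-243/200)).
{ exists 101%nat; cellt x y r (81/200) (243/400) (-567/400) (-243/200) (81/200) (-243/200). }
destruct (Rle_lt_dec y (-81/80)).
{ exists 102%nat; cellt x y r (81/200) (243/400) (-243/200) (-81/80) (81/200) (-81/80). }
destruct (Rle_lt_dec y (-81/100)).
{ exists 103%nat; cellt x y r (81/200) (243/400) (-81/80) (-81/100) (81/200) (-81/100). }
destruct (Rle_lt_dec y (-243/400)).
{ exists 104%nat; cellt x y r (81/200) (243/400) (-81/100) (-243/400) (81/200) (-243/400). }
destruct (Rle_lt_dec y (-81/200)).
{ exists 105%nat; cellt x y r (81/200) (243/400) (-243/400) (-81/200) (81/200) (-81/200). }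
destruct (Rle_lt_dec y (-81/400)).
{ exists 106%nat; cellt x y r (81/200) (243/400) (-81/200) (-81/400) (81/200) (-81/400). }
destruct (Rle_lt_dec y (0)).
{ exists 107%nat; cellt x y r (81/200) (243/400) (-81/400) (0) (81/200) (0). }
destruct (Rle_lt_dec y (81/400)).
{ exists 108%nat; cellt x y r (81/200) (243/400) (0) (81/400) (81/200) (0). }
destruct (Rle_lt_dec y (81/200)).
{ exists 109%nat; cellt x y r (81/200) (243/400) (81/400) (81/200) (81/200) (81/400). }
destruct (Rle_lt_dec y (243/400)).
{ exists 110%nat; cellt x y r (81/200) (243/400) (81/200) (243/400) (81/200) (81/200). }
destruct (Rle_lt_dec y (81/100)).
{ exists 111%nat; cellt x y r (81/200) (243/400) (243/400) (81/100) (81/200) (243/400). }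
destruct (Rle_lt_dec y (81/80)).
{ exists 112%nat; cellt x y r (81/200) (243/400) (81/100) (81/80) (81/200) (81/100). }
destruct (Rle_lt_dec y (243/200)).
{ exists 113%nat; cellt x y r (81/200) (243/400) (81/80) (243/200) (81/200) (81/80). }
destruct (Rle_lt_dec y (567/400)).
{ exfalso; lra. }
exfalso; lra. }
destruct (Rle_lt_dec x (81/100)).
{ destruct (Rle_lt_dec y (-567/400)).
{ exfalso; lra. }
destruct (Rle_lt_dec y (-243/200)).
{ exfalso; lra. }
destruct (Rle_lt_dec y (-81/80)).
{ exists 114%nat; cellt x y r (243/400) (81/100) (-243/200) (-81/80) (243/400) (-81/80). }
destruct (Rle_lt_dec y (-81/100)).
{ exists 115%nat; cellt x y r (243/400) (81/100) (-81/80) (-81/100) (243/400) (-81/100). }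
destruct (Rle_lt_dec y (-243/400)).
{ exists 116%nat; cellt x y r (243/400) (81/100) (-81/100) (-243/400) (243/400) (-243/400). }
destruct (Rle_lt_dec y (-81/200)).
{ exists 117%nat; cellt x y r (243/400) (81/100) (-243/400) (-81/200) (243/400) (-81/200). }
destruct (Rle_lt_dec y (-81/400)).
{ exists 118%nat; cellt x y r (243/400) (81/100) (-81/200) (-81/400) (243/400) (-81/400). }
destruct (Rle_lt_dec y (0)).
{ exists 119%nat; cellt x y r (243/400) (81/100) (-81/400) (0) (243/400) (0). }
destruct (Rle_lt_dec y (81/400)).
{ exists 120%nat; cellt x y r (243/400) (81/100) (0) (81/400) (243/400) (0). }
destruct (Rle_lt_dec y (81/200)).
{ exists 121%nat; cellt x y r (243/400) (81/100) (81/400) (81/200) (243/400) (81/400). }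
destruct (Rle_lt_dec y (243/400)).
{ exists 122%nat; cellt x y r (243/400) (81/100) (81/200) (243/400) (243/400) (81/200). }
destruct (Rle_lt_dec y (81/100)).
{ exists 123%nat; cellt x y r (243/400) (81/100) (243/400) (81/100) (243/400) (243/400). }
destruct (Rle_lt_dec y (81/80)).
{ exists 124%nat; cellt x y r (243/400) (81/100) (81/100) (81/80) (243/400) (81/100). }
destruct (Rle_lt_dec y (243/200)).
{ exfalso; lra. }
destruct (Rle_lt_dec y (567/400)).
{ exfalso; lra. }
exfalso; lra. }
destruct (Rle_lt_dec x (81/80)).
{ destruct (Rle_lt_dec y (-567/400)).
{ exfalso; lra. }
destruct (Rle_lt_dec y (-243/200)).
{ exfalso; lra. }
destruct (Rle_lt_dec y (-81/80)).
{ exfalso; lra. }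
destruct (Rle_lt_dec y (-81/100)).
{ exists 125%nat; cellt x y r (81/100) (81/80) (-81/80) (-81/100) (81/100) (-81/100). }
destruct (Rle_lt_dec y (-243/400)).
{ exists 126%nat; cellt x y r (81/100) (81/80) (-81/100) (-243/400) (81/100) (-243/400). }
destruct (Rle_lt_dec y (-81/200)).
{ exists 127%nat; cellt x y r (81/100) (81/80) (-243/400) (-81/200) (81/100) (-81/200). }
destruct (Rle_lt_dec y (-81/400)).
{ exists 128%nat; cellt x y r (81/100) (81/80) (-81/200) (-81/400) (81/100) (-81/400). }
destruct (Rle_lt_dec y (0)).
{ exists 129%nat; cellt x y r (81/100) (81/80) (-81/400) (0) (81/100) (0). }
destruct (Rle_lt_dec y (81/400)).
{ exists 130%nat; cellt x y r (81/100) (81/80) (0) (81/400) (81/100) (0). }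
destruct (Rle_lt_dec y (81/200)).
{ exists 131%nat; cellt x y r (81/100) (81/80) (81/400) (81/200) (81/100) (81/400). }
destruct (Rle_lt_dec y (243/400)).
{ exists 132%nat; cellt x y r (81/100) (81/80) (81/200) (243/400) (81/100) (81/200). }
destruct (Rle_lt_dec y (81/100)).
{ exists 133%nat; cellt x y r (81/100) (81/80) (243/400) (81/100) (81/100) (243/400). }
destruct (Rle_lt_dec y (81/80)).
{ exfalso; lra. }
destruct (Rle_lt_dec y (243/200)).
{ exfalso; lra. }
destruct (Rle_lt_dec y (567/400)).
{ exfalso; lra. }
exfalso; lra. }
destruct (Rle_lt_dec x (243/200)).
{ destruct (Rle_lt_dec y (-567/400)).
{ exfalso; lra. }
destruct (Rle_lt_dec y (-243/200)).
{ exfalso; lra. }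
destruct (Rle_lt_dec y (-81/80)).
{ exfalso; lra. }
destruct (Rle_lt_dec y (-81/100)).
{ exfalso; lra. }
destruct (Rle_lt_dec y (-243/400)).
{ exists 134%nat; cellt x y r (81/80) (243/200) (-81/100) (-243/400) (81/80) (-243/400). }
destruct (Rle_lt_dec y (-81/200)).
{ exists 135%nat; cellt x y r (81/80) (243/200) (-243/400) (-81/200) (81/80) (-81/200). }
destruct (Rle_lt_dec y (-81/400)).
{ exists 136%nat; cellt x y r (81/80) (243/200) (-81/200) (-81/400) (81/80) (-81/400). }
destruct (Rle_lt_dec y (0)).
{ exists 137%nat; cellt x y r (81/80) (243/200) (-81/400) (0) (81/80) (0). }
destruct (Rle_lt_dec y (81/400)).
{ exists 138%nat; cellt x y r (81/80) (243/200) (0) (81/400) (81/80) (0). }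
destruct (Rle_lt_dec y (81/200)).
{ exists 139%nat; cellt x y r (81/80) (243/200) (81/400) (81/200) (81/80) (81/400). }
destruct (Rle_lt_dec y (243/400)).
{ exists 140%nat; cellt x y r (81/80) (243/200) (81/200) (243/400) (81/80) (81/200). }
destruct (Rle_lt_dec y (81/100)).
{ exfalso; lra. }
destruct (Rle_lt_dec y (81/80)).
{ exfalso; lra. }
destruct (Rle_lt_dec y (243/200)).
{ exfalso; lra. }
destruct (Rle_lt_dec y (567/400)).
{ exfalso; lra. }
exfalso; lra. }
destruct (Rle_lt_dec x (567/400)).
{ destruct (Rle_lt_dec y (-567/400)).
{ exfalso; lra. }
destruct (Rle_lt_dec y (-243/200)).
{ exfalso; lra. }
destruct (Rle_lt_dec y (-81/80)).
{ exfalso; lra. }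
destruct (Rle_lt_dec y (-81/100)).
{ exfalso; lra. }
destruct (Rle_lt_dec y (-243/400)).
{ exfalso; lra. }
destruct (Rle_lt_dec y (-81/200)).
{ exists 141%nat; cellt x y r (243/200) (567/400) (-243/400) (-81/200) (243/200) (-81/200). }
destruct (Rle_lt_dec y (-81/400)).
{ exists 142%nat; cellt x y r (243/200) (567/400) (-81/200) (-81/400) (243/200) (-81/400). }
destruct (Rle_lt_dec y (0)).
{ exists 143%nat; cellt x y r (243/200) (567/400) (-81/400) (0) (243/200) (0). }
destruct (Rle_lt_dec y (81/400)).
{ exists 144%nat; cellt x y r (243/200) (567/400) (0) (81/400) (243/200) (0). }
destruct (Rle_lt_dec y (81/200)).
{ exists 145%nat; cellt x y r (243/200) (567/400) (81/400) (81/200) (243/200) (81/400). }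
destruct (Rle_lt_dec y (243/400)).
{ exfalso; lra. }
destruct (Rle_lt_dec y (81/100)).
{ exfalso; lra. }
destruct (Rle_lt_dec y (81/80)).
{ exfalso; lra. }
destruct (Rle_lt_dec y (243/200)).
{ exfalso; lra. }
destruct (Rle_lt_dec y (567/400)).
{ exfalso; lra. }
exfalso; lra. }
destruct (Rle_lt_dec y (-567/400)).
{ exfalso; lra. }
destruct (Rle_lt_dec y (-243/200)).
{ exfalso; lra. }
destruct (Rle_lt_dec y (-81/80)).
{ exfalso; lra. }
destruct (Rle_lt_dec y (-81/100)).
{ exfalso; lra. }
destruct (Rle_lt_dec y (-243/400)).
{ exfalso; lra. }
destruct (Rle_lt_dec y (-81/200)).
{ exfalso; lra. }
destruct (Rle_lt_dec y (-81/400)).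
{ exfalso; lra. }
destruct (Rle_lt_dec y (0)).
{ exfalso; lra. }
destruct (Rle_lt_dec y (81/400)).
{ exfalso; lra. }
destruct (Rle_lt_dec y (81/200)).
{ exfalso; lra. }
destruct (Rle_lt_dec y (243/400)).
{ exfalso; lra. }
destruct (Rle_lt_dec y (81/100)).
{ exfalso; lra. }
destruct (Rle_lt_dec y (81/80)).
{ exfalso; lra. }
destruct (Rle_lt_dec y (243/200)).
{ exfalso; lra. }
destruct (Rle_lt_dec y (567/400)).
{ exfalso; lra. }
exfalso; lra.
Qed.
Definition sumL (l : list box) : R := fold_right (fun b s => box_hvol b + s) 0 l.

Lemma hvol_nonneg b : box_valid b -> 0 <= box_hvol b.
Proof.
  destruct b as [x1 x2 y1 y2 r1 r2]; unfold box_valid, box_hvol; simpl.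
  intros (H1 & H2 & H3 & H4).
  apply Rmult_le_pos; [apply Rmult_le_pos; lra|].
  assert (/ (2 * r2 ^ 2) <= / (2 * r1 ^ 2)).
  { apply Rinv_le_contravar; [nra | nra]. }
  simpl in H. lra.
Qed.

Lemma sumL_nonneg l : Forall box_valid l -> 0 <= sumL l.
Proof.
  induction 1; simpl; [lra|]. pose proof (hvol_nonneg x H). lra.
Qed.

Lemma sum_zero n : sum_f_R0 (fun k => box_hvol (nth k [] zbox)) n = 0.
Proof.
  induction n; cbn [sum_f_R0].
  - unfold box_hvol, zbox; simpl; ring.
  - rewrite IHn; unfold box_hvol, zbox; simpl; ring.
Qed.

Lemma sum_le l : Forall box_valid l -> forall n,
  sum_f_R0 (fun k => box_hvol (nth k l zbox)) n <= sumL l.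
Proof.
  induction 1 as [|b l Hb Hl IH]; intro n.
  - rewrite sum_zero; simpl; lra.
  - destruct n as [|m].
    + simpl. pose proof (sumL_nonneg l Hl). lra.
    + rewrite decomp_sum by lia. simpl. specialize (IH m). simpl in IH. lra.
Qed.

Lemma valid_nth l : Forall box_valid l -> forall n, box_valid (nth n l zbox).
Proof.
  intros H n. revert l H. induction n; intros l H; destruct H; simpl; auto;
  unfold box_valid, zbox; simpl; lra.
Qed.

Lemma BL_valid : Forall box_valid BL.
Proof. unfold BL; repeat constructor; unfold box_valid; simpl; lra. Qed.

Lemma BL_sum : sumL BL < 977029 / 100000.
Proof. unfold BL, sumL, box_hvol; simpl. lra. Qed.

Ltac inS := unfold S, units; simpl; repeat (first [left; reflexivity | right]).

Theorem lemma2 : hvol_lt Poly (977029 / 100000).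
Proof.
  exists (fun n => nth n BL zbox). split; [|split].
  - apply valid_nth, BL_valid.
  - intros [[x y] r] [Hr HP]. unfold inH3 in Hr; simpl in Hr.
    pose proof (rel0 x y r Hr (gen u1 _ den0 (HP u1 ltac:(inS)))) as H0.
    assert (Hw : x*x+y*y+r*r <= 26181/10000) by lra.
    pose proof (rel1 x y r Hr Hw (gen u2 _ den1 (HP u2 ltac:(inS)))) as H1.
    pose proof (rel2 x y r Hr Hw (gen u3 _ den2 (HP u3 ltac:(inS)))) as H2.
    pose proof (rel3 x y r Hr Hw (gen u4 _ den3 (HP u4 ltac:(inS)))) as H3.
    pose proof (rel4 x y r Hr Hw (gen u5 _ den4 (HP u5 ltac:(inS)))) as H4.
    pose proof (rel5 x y r Hr Hw (gen u6 _ den5 (HP u6 ltac:(inS)))) as H5.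
    pose proof (rel6 x y r Hr Hw (gen u7 _ den6 (HP u7 ltac:(inS)))) as H6.
    pose proof (rel7 x y r Hr Hw (gen u8 _ den7 (HP u8 ltac:(inS)))) as H7.
    pose proof (rel8 x y r Hr Hw (gen (M2inv u1) _ den8 (HP (M2inv u1) ltac:(inS)))) as H8.
    pose proof (rel9 x y r Hr Hw (gen (M2inv u2) _ den9 (HP (M2inv u2) ltac:(inS)))) as H9.
    pose proof (rel10 x y r Hr Hw (gen (M2inv u3) _ den10 (HP (M2inv u3) ltac:(inS)))) as H10.
    pose proof (rel11 x y r Hr Hw (gen (M2inv u4) _ den11 (HP (M2inv u4) ltac:(inS)))) as H11.
    pose proof (rel12 x y r Hr Hw (gen (M2inv u5) _ den12 (HP (M2inv u5) ltac:(inS)))) as H12.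
    pose proof (rel13 x y r Hr Hw (gen (M2inv u6) _ den13 (HP (M2inv u6) ltac:(inS)))) as H13.
    pose proof (rel14 x y r Hr Hw (gen (M2inv u7) _ den14 (HP (M2inv u7) ltac:(inS)))) as H14.
    pose proof (rel15 x y r Hr Hw (gen (M2inv u8) _ den15 (HP (M2inv u8) ltac:(inS)))) as H15.
    exact (cover_pt x y r Hr H0 H1 H2 H3 H4 H5 H6 H7 H8 H9 H10 H11 H12 H13 H14 H15).
  - exists (sumL BL). split; [exact BL_sum|].
    intro n. apply sum_le, BL_valid.
Qed.
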